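(* For every PICOD hypergraph $\mathcal{H}$, $\beta(\mathcal{H})\ge\eta(\mathcal{H})$, where $\eta(\mathcal{H})$ is the nesting number of $\mathcal{H}$.
   Context: PICOD problem: a server holds $m$ messages $b_1,\dots,b_m\in\mathbb{F}_q$; there are $n$ clients, client $i$ having side-information $\{b_j: j\in S_i\}$, $S_i\subseteq[m]$, and request-set $R_i=[m]\setminus S_i$ (assumed non-empty); client $i$ wants any one message $b_j$ with $j\in R_i$. A PICOD scheme of length $\ell$ over $\mathbb{F}_q$ is an encoding map $\phi:\mathbb{F}_q^m\to\mathbb{F}_q^\ell$ such that for every client $i$ there is an index $j_i\in R_i$ and a function $\psi_i$ with $\psi_i(\phi(b),(b_k)_{k\in S_i})=b_{j_i}$ for all $b\in\mathbb{F}_q^m$. The PICOD hypergraph $\mathcal{H}=(\mathcal{V},\mathcal{E})$ has vertex set $[m]$ and edge set $\{R_i:i\in[n]\}$. $\beta_q(\mathcal{H})$ is the minimum length of a PICOD scheme over $\mathbb{F}_q$, and $\beta(\mathcal{H})=\min_q\beta_q(\mathcal{H})$ over all prime powers $q$. A nested collection of hyperedges of $\mathcal{H}$ of nesting length $L$ is a family $\mathcal{E}_1,\dots,\mathcal{E}_L\subseteq\mathcal{E}$ with $|\mathcal{E}_i|=2^{i-1}$ for each $i\in[L]$, such that for every $i\in[L-1]$ and every $R\in\mathcal{E}_i$ there exist non-empty edges $R',R''\in\mathcal{E}_{i+1}$ with $R'\subsetneq R$, $R''\subsetneq R$ and $R'\cap R''=\emptyset$. The nesting number $\eta(\mathcal{H})$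 is the maximum nesting length of a nested collection of hyperedges of $\mathcal{H}$. *)

(* Defs.v *)
From mathcomp Require Import all_boot all_order all_algebra all_field.
Set Implicit Arguments. Unset Strict Implicit. Unset Printing Implicit Defensive.

(* A PICOD problem with m messages and n clients is given by the
   side-information sets S : 'I_n -> {set 'I_m}; client i requests
   R_i = ~: S i. *)

Definition request_set (m n : nat) (S : 'I_n -> {set 'I_m}) (i : 'I_n)
  : {set 'I_m} := ~: S i.

Definition picod_edges (m n : nat) (S : 'I_n -> {set 'I_m})
  : {set {set 'I_m}} := [set request_set S i | i : 'I_n].

(* A PICOD scheme of length l over the finite field F: an (arbitrary)
   encoding map phi : F^m -> F^l such that each client i can decode some
   b_j, j in R_i, from phi(b) and its side information (b_k)_{k in S_i}. *)
Definition is_picod_scheme (F : finFieldType) (m n : nat)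
  (S : 'I_n -> {set 'I_m}) (l : nat)
  (phi : ('I_m -> F) -> ('I_l -> F)) : Prop :=
  forall i : 'I_n,
    exists2 j : 'I_m, j \in request_set S i &
      exists psi : ('I_l -> F) -> ({k : 'I_m | k \in S i} -> F) -> F,
        forall b : 'I_m -> F,
          psi (phi b) (fun k => b (val k)) = b j.

(* A nested collection of hyperedges of nesting length L (levels indexed
   from 0: level t has 2^t edges, t < L). *)
Definition nested_collection (m : nat) (E : {set {set 'I_m}}) (L : nat)
  (Es : nat -> {set {set 'I_m}}) : Prop :=
  (forall t, t < L -> Es t \subset E /\ #|Es t| = 2 ^ t) /\
  (forall t, t.+1 < L -> forall R, R \in Es t ->
     exists R' R'', [/\ R' \in Es t.+1, R'' \in Es t.+1,
        R' != set0, R'' != set0 &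
        [/\ R' \proper R, R'' \proper R & [disjoint R' & R'']]]).

(* Main.v *)
Require Import Defs.
From mathcomp Require Import all_boot all_order all_algebra all_field.
From Stdlib Require Import FunctionalExtensionality.

Section Aux.
Variables (m n : nat) (S : 'I_n -> {set 'I_m}) (F : finFieldType) (l : nat)
  (phi : ('I_m -> F) -> ('I_l -> F)).

Definition dec (c : 'I_n) (j : 'I_m) : Prop :=
  exists psi : ('I_l -> F) -> ({k : 'I_m | k \in S c} -> F) -> F,
    forall b : 'I_m -> F, psi (phi b) (fun k => b (val k)) = b j.

Fixpoint chain (s : seq ('I_n * 'I_m)) : Prop :=
  match s with
  | [::] => True
  | p :: s' => [/\ p.2 \in request_set S p.1, dec p.1 p.2,
       all (fun q => q.2 \in request_set S p.1) s', p.2 \notin map snd s'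
       & chain s']
  end.

Lemma chain_uniq s : chain s -> uniq (map snd s).
Proof. by elim: s => [|p s IH] //= [_ _ _ H1 H2]; rewrite H1 IH. Qed.

Lemma chain_inj s : chain s -> forall x y : 'I_m -> F,
  (forall k, k \notin map snd s -> x k = y k) -> phi x = phi y ->
  forall k, x k = y k.
Proof.
elim: s => [|[c j] s IH] /=; first by move=> _ x y H _ k; apply: H.
case=> Hj [psi Hpsi] Hall Hnot Hch x y Hout Hphi.
have xj : x j = y j.
  rewrite -!Hpsi Hphi; congr (psi _ _); apply: functional_extensionality.
  case=> k hk /=; apply: Hout; rewrite inE negb_or; apply/andP; split.
    apply/eqP=> E; move: Hj; rewrite /request_set inE -E hk; done.
  apply/negP=> /mapP [q qin Eq]; move/allP: Hall => /(_ q qin).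
  by rewrite /request_set inE /= -Eq hk.
apply: IH => // k kn; have [->|kj] := eqVneq k j; first by [].
by apply: Hout; rewrite inE negb_or kj.
Qed.

End Aux.
Arguments chain {m n} S {F l} phi s.
Arguments chain_uniq {m n S F l phi s}.
Arguments chain_inj {m n S F l phi s}.

Theorem theorem2 (m n : nat) (S : 'I_n -> {set 'I_m})
  (hR : forall i : 'I_n, request_set S i != set0) :
  forall (F : finFieldType) (l : nat) (phi : ('I_m -> F) -> ('I_l -> F)),
    is_picod_scheme S phi ->
  forall (L : nat) (Es : nat -> {set {set 'I_m}}),
    nested_collection (picod_edges S) L Es ->
  L <= l.
Proof.
move=> F l phi Hsch L Es [Hlev Hnest].
have build : forall k t, t + k < L -> forall R, R \in Es t ->
   exists s : seq ('I_n * 'I_m), [/\ size s = k.+1, chain S phi s &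
     all (fun p => (request_set S p.1 \subset R) && (p.2 \in R)) s].
  elim=> [|k IH] t htk R HR.
    have [/subsetP sub _] := Hlev t (leq_ltn_trans (leq_addr _ _) htk).
    have /imsetP [c _ ->] := sub R HR.
    have [j Hj Hd] := Hsch c.
    exists [:: (c, j)]; split=> /=; [done | by split | by rewrite subxx andbT /=].
  have [/subsetP sub _] := Hlev t (leq_ltn_trans (leq_addr _ _) htk).
  have /imsetP [c _ ER] := sub R HR.
  have [j Hj Hd] := Hsch c.
  have ht1 : t.+1 < L by apply: leq_ltn_trans htk; rewrite addnS ltnS leq_addr.
  have [R' [R'' [H1 H2 _ _ [P1 P2 D]]]] := Hnest t ht1 R HR.
  have [Rs [HRs PRs jRs]] : exists Rs, [/\ Rs \in Es t.+1, Rs \proper R & j \notin Rs].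
    case jR': (j \in R'); last by exists R'; rewrite jR'.
    exists R''; split=> //; apply/negP=> jR''.
    by move: D; rewrite disjoint_subset => /subsetP /(_ j jR'); rewrite inE jR''.
  have htk' : t.+1 + k < L by rewrite addSnnS.
  have [s [sz ch al]] := IH t.+1 htk' Rs HRs.
  have sRs : Rs \subset R := proper_sub PRs.
  exists ((c, j) :: s); split=> /=; first by rewrite sz.
    split=> //.
    - apply/allP=> q qin; move/allP: al => /(_ q qin) /andP [_ q2].
      by rewrite -ER (subsetP sRs).
    - apply/negP=> /mapP [q qin Eq]; move/allP: al => /(_ q qin) /andP [_ q2].
      by move: jRs; rewrite Eq q2.
  have jR : j \in R by rewrite ER.
  rewrite -ER subxx jR /=; apply/allP=> q qin.
  move/allP: al => /(_ q qin) /andP [q1 q2].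
  by rewrite (subset_trans q1 sRs) (subsetP sRs).
case: L Hlev Hnest build => [//|k] Hlev Hnest build.
have [_ c0] := Hlev 0 (ltn0Sn k).
have : 0 < #|Es 0| by rewrite c0.
case/card_gt0P => R HR.
have hk0 : 0 + k < k.+1 by rewrite add0n.
have [s [sz ch _]] := build k 0 hk0 R HR.
pose M := [set x in map snd s].
have cM : #|M| = k.+1.
  by rewrite cardsE; move/card_uniqP: (chain_uniq ch) => ->; rewrite size_map.
pose g (f : {ffun 'I_m -> F}) : {ffun 'I_l -> F} := [ffun i => phi f i].
have inj : {in pffun_on (0%R : F) M predT &, injective g}.
  move=> f1 f2 /pffun_onP [s1 _] /pffun_onP [s2 _] Eg.
  apply/ffunP => k'; apply: (chain_inj ch) => [k2 k2n|].
    have h1 : f1 k2 = 0%R.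
      apply/eqP; apply: contraNT k2n => nz.
      by have := subsetP s1 k2; rewrite !inE; apply.
    have h2 : f2 k2 = 0%R.
      apply/eqP; apply: contraNT k2n => nz.
      by have := subsetP s2 k2; rewrite !inE; apply.
    by rewrite h1 h2.
  apply: functional_extensionality => i.
  by have := congr1 (fun h : {ffun _ -> _} => h i) Eg; rewrite /g !ffunE.
have := max_card (g @: pffun_on (0%R : F) M predT).
rewrite (card_in_imset inj) card_pffun_on card_ffun card_ord cM.
have F1 : 1 < #|predT : {pred F}|.
  apply/card_gt1P; exists 0%R, 1%R; split=> //; rewrite eq_sym; exact: GRing.oner_neq0.
move=> H; rewrite -(leq_exp2l _ _ F1); exact: H.
Qed.
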